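(* Let $r\ge 2$ and $k\ge 3$ be integers. There is a constant $C=C(k,r)$ such that for every positive integer $n$ there exists a coloring of $[n]=\{1,2,\ldots,n\}$ with $r$ colors in which the number of monochromatic $k$-APs is at most $\frac{1}{2(k-1)r^{k-1}}n^2+Cn$.
   Context: A $k$-term arithmetic progression ($k$-AP) in $[n]$ is a sequence $a,a+d,a+2d,\ldots,a+(k-1)d$ of elements of $[n]$ with $d\ge 1$ an integer. It is monochromatic under a coloring if all $k$ of its terms receive the same color. *)

(* Defs.v *)
From mathcomp Require Import all_boot all_order all_algebra.
Set Implicit Arguments. Unset Strict Implicit. Unset Printing Implicit Defensive.

Definition kAP_in (n k a d : nat) : bool :=
  [&& 1 <= a, 1 <= d & a + (k - 1) * d <= n].

Definition mono_kAP (r : nat) (c : nat -> 'I_r) (k a d : nat) : bool :=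
  [forall i : 'I_k, c (a + i * d) == c a].

(* Each AP is identified with its pair (a, d); since
   a <= n and d <= n are forced, the ranges below are exhaustive. *)
Definition num_mono_kAP (r : nat) (c : nat -> 'I_r) (n k : nat) : nat :=
  \sum_(0 <= a < n.+1) \sum_(0 <= d < n.+1)
     (kAP_in n k a d && mono_kAP c k a d).

(* Main.v *)
Require Import Defs.
From mathcomp Require Import all_boot all_order all_algebra zify.
Set Implicit Arguments. Unset Strict Implicit. Unset Printing Implicit Defensive.


Lemma card_const_on (N r : nat) (s : seq 'I_N) (v : 'I_r) :
  uniq s ->
  #|(family (fun x => if x \in s then pred1 v else predT) : simpl_pred {ffun 'I_N -> 'I_r})|
   = r ^ (N - size s).
Proof.
move=> us.
rewrite card_family foldrE big_image /=.
rewrite (bigID (fun x => x \in s)) /=.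
rewrite big1; last by move=> x ->; rewrite card1.
rewrite mul1n.
rewrite (eq_bigr (fun _ => r)); last by move=> x /negbTE ->; rewrite /= card_ord.
rewrite prod_nat_const.
have H := cardC (mem s); rewrite card_ord (card_uniqP us) in H.
have E : N - size s = #|[predC s]| :=
  etrans (f_equal (fun t => t - size s) (esym H)) (addKn _ _).
congr (_ ^ _); rewrite E; exact: eq_card.
Qed.

Lemma sum_bool (T : finType) (P : pred T) : \sum_(x : T) (P x : nat) = #|P|.
Proof. rewrite -sum1_card [RHS]big_mkcond; apply: eq_bigr => x _; rewrite unfold_in; by case: (P x). Qed.

Lemma mono_count n k r a d : kAP_in n k a d -> (0 < k)%N ->
  \sum_(f : {ffun 'I_n.+1 -> 'I_r}) (mono_kAP (fun x => f (inord x)) k a d : nat)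
  = r * r ^ (n.+1 - k).
Proof.
case/and3P=> a1 d1 le => k0.
pose s := [seq (inord (a + val i * d) : 'I_n.+1) | i <- enum 'I_k].
pose x0 := (inord a : 'I_n.+1).
have bnd (i : 'I_k) : (a + i * d < n.+1)%N.
  have := ltn_ord i => ik; have : (i * d <= (k - 1) * d)%N by apply: leq_mul => //; lia.
  lia.
have us : uniq s.
  rewrite map_inj_uniq ?enum_uniq // => i j /(f_equal val) /=.
  rewrite !inordK ?bnd // => /eqP; rewrite eqn_add2l eqn_pmul2r // => /eqP.
  exact: val_inj.
have ss : size s = k by rewrite size_map size_enum_ord.
have x0s : x0 \in s.
  apply/mapP; exists (Ordinal k0); first by rewrite mem_enum.
  by rewrite /x0 /= mul0n addn0.
pose F (v : 'I_r) := (fun x : 'I_n.+1 => if x \in s then pred1 v else predT).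
have step (f : {ffun 'I_n.+1 -> 'I_r}) :
  (mono_kAP (fun x => f (inord x)) k a d : nat) =
   \sum_(v : 'I_r) ((f \in (family (F v) : simpl_pred {ffun 'I_n.+1 -> 'I_r})) : nat).
  rewrite (bigD1 (f x0)) //= big1 ?addn0.
  - congr nat_of_bool; apply/forallP/familyP => H x.
    + rewrite /F; case: ifP => // /mapP [i _ ->]; rewrite inE; exact: H.
    + have := H (inord (a + x * d)); rewrite /F ifT ?inE //.
      by apply/mapP; exists x; rewrite ?mem_enum.
  - move=> v nv; apply/eqP; rewrite eqb0; apply/negP => /familyP /(_ x0).
    rewrite /F x0s inE => /eqP E; by rewrite E eqxx in nv.
under eq_bigr do rewrite step.
rewrite exchange_big /=.
under eq_bigr do rewrite sum_bool card_const_on // ss.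
by rewrite sum_nat_const card_ord.
Qed.

Lemma sum_a (N n c : nat) :
  \sum_(0 <= a < N) ((1 <= a) && (a + c <= n) : nat) = minn N.-1 (n - c).
Proof.
elim: N => [|N IH]; first by rewrite big_geq // min0n.
rewrite big_nat_recr //= IH.
case: N {IH} => [|N] /=; first by rewrite ?min0n ?add0n; lia.
case: (leqP (N.+1 + c) n) => h /=; lia.
Qed.

Lemma inv_bound (n K M : nat) : (0 < K)%N ->
  2 * K * \sum_(0 <= d < M.+1) (if (0 < d)%N then n - K * d else 0)
   + (n - K * M) ^ 2 <= n ^ 2.
Proof.
move=> K0; elim: M => [|M IH]; first by rewrite big_nat1 /=; lia.
rewrite big_nat_recr //= mulnDr.
set S := \sum_(0 <= d < M.+1) _ in IH *.
have e : n - K * M.+1 = (n - K * M) - K by rewrite mulnS addnC subnDA.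
rewrite e; move: IH; move: (n - K * M) => x IH.
case: (leqP K x) => h.
- have [y ey] : exists y, x = y + K by exists (x - K); rewrite subnK.
  subst x; rewrite addnK; move: IH; rewrite /= !expnS !expn0 !muln1. nia.
- have -> : x - K = 0 by lia.
  lia.
Qed.

Lemma avg (T : finType) (g : T -> nat) (A : nat) : (0 < #|T|)%N ->
  \sum_(x : T) g x = #|T| * A -> exists x, (g x <= A)%N.
Proof.
move=> T0 hs; case: (pickP (fun x => g x <= A)%N) => [x hx|H]; first by exists x.
have : (\sum_(x : T) A.+1 <= \sum_(x : T) g x)%N.
  by apply: leq_sum => x _; rewrite ltnNge H.
rewrite hs sum_nat_const => H2.
have H3 : (#|T| * A.+1 <= #|T| * A)%N by apply: leq_trans H2; rewrite leq_mul2r; apply/orP; right; apply/subset_leq_card/subsetP.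
nia.
Qed.

Lemma total_count n k r : (2 <= k)%N ->
  \sum_(f : {ffun 'I_n.+1 -> 'I_r}) (num_mono_kAP (fun x => f (inord x)) n k * r ^ (k - 1))
  = #|{ffun 'I_n.+1 -> 'I_r}| * \sum_(0 <= a < n.+1) \sum_(0 <= d < n.+1) (kAP_in n k a d : nat).
Proof.
move=> k2.
rewrite card_ffun !card_ord -big_distrl /= /num_mono_kAP.
rewrite exchange_big big_distrl big_distrr /=; apply: eq_bigr => a _.
rewrite exchange_big big_distrl big_distrr /=; apply: eq_bigr => d _.
case hk: (kAP_in n k a d) => /=.
- rewrite mono_count //; last lia.
  have kn : (k <= n.+1)%N by move: hk; rewrite /kAP_in; case/and3P => *; nia.
  rewrite muln1 -!expnS -expnD; congr (_ ^ _); lia.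
- by rewrite big1 // muln0.
Qed.

Lemma aps_bound n k : (2 <= k)%N ->
  (2 * (k - 1) * \sum_(0 <= a < n.+1) \sum_(0 <= d < n.+1) (kAP_in n k a d : nat) <= n ^ 2)%N.
Proof.
move=> k2.
rewrite exchange_big /=.
have := @inv_bound n (k - 1) n ltac:(lia).
apply: leq_trans; apply: leq_trans (leq_addr _ _); rewrite leq_mul2l; apply/orP; right.
apply: leq_sum => d _.
rewrite (eq_bigr (fun a => ((1 <= a) && (a + (k - 1) * d <= n) && (0 < d)%N : nat))).
  2: by move=> a _; rewrite /kAP_in; case: (1 <= a)%N; case: (0 < d)%N; rewrite ?andbF ?andbT.
case: (posnP d) => [->|dp].
  by rewrite big1 // => a _; rewrite andbF.
rewrite (eq_bigr (fun a => ((1 <= a) && (a + (k - 1) * d <= n) : nat))); last first.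
  by move=> a _; rewrite andbT.
rewrite sum_a /=; lia.
Qed.

Import Order.TTheory GRing.Theory Num.Theory.
Local Open Scope ring_scope.

Theorem mainTheorem1 (k r : nat) (hr : (2 <= r)%N) (hk : (3 <= k)%N) :
  exists C : rat, forall n : nat, (0 < n)%N ->
    exists c : nat -> 'I_r,
      (num_mono_kAP c n k)%:R <=
        (n ^ 2)%:R / (2 * (k - 1) * r ^ (k - 1))%:R + C * n%:R.
Proof.
exists 0 => n _.
have k2 : (2 <= k)%N by lia.
have := total_count n r k2.
have c0 : (0 < #|{ffun 'I_n.+1 -> 'I_r}|)%N by rewrite card_ffun card_ord expn_gt0; lia.
move/(avg c0) => [f hf].
exists (fun x => f (inord x)).
rewrite mul0r addr0 ler_pdivlMr; last by rewrite ltr0n !muln_gt0 expn_gt0; lia.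
rewrite -natrM ler_nat.
apply: leq_trans (aps_bound n k2).
rewrite mulnC -mulnA leq_mul2l; apply/orP; right; by rewrite mulnC.
Qed.
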